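(* Let $M$ be an arbitrarily divisible monoid, let $N$ be a finite monoid, and let $\varphi \colon M \to N$ be a monoid morphism. Then the image $\varphi(M)$ is an idempotent monoid, i.e. $\varphi(m)^2 = \varphi(m)$ for every $m \in M$.
   Context: A monoid $M$ is called arbitrarily divisible if for every $m \in M$ and every positive integer $k$ there exists $m_k \in M$ with $(m_k)^k = m$. A monoid morphism $\varphi\colon M\to N$ satisfies $\varphi(1_M)=1_N$ and $\varphi(m_1m_2)=\varphi(m_1)\varphi(m_2)$. A monoid is idempotent if every element $e$ satisfies $e^2=e$. *)

(* Defs.v *)
From mathcomp Require Import all_boot.
Set Implicit Arguments.
Unset Strict Implicit.
Unset Printing Implicit Defensive.

Definition is_monoid (T : Type) (mul : T -> T -> T) (one : T) : Prop :=
  (forall x y z, mul x (mul y z) = mul (mul x y) z) /\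
  (forall x, mul one x = x) /\ (forall x, mul x one = x).

Fixpoint mpow (T : Type) (mul : T -> T -> T) (one : T) (k : nat) (m : T) : T :=
  match k with
  | 0 => one
  | k'.+1 => mul m (mpow mul one k' m)
  end.

Definition arbitrarily_divisible (T : Type) (mul : T -> T -> T) (one : T) : Prop :=
  forall (m : T) (k : nat), 0 < k -> exists mk : T, mpow mul one k mk = m.

Definition is_monoid_morphism (M N : Type) (mulM : M -> M -> M) (oneM : M)
  (mulN : N -> N -> N) (oneN : N) (phi : M -> N) : Prop :=
  phi oneM = oneN /\ (forall m1 m2, phi (mulM m1 m2) = mulN (phi m1) (phi m2)).

(* Main.v *)
Require Import Defs.
From mathcomp Require Import all_boot.
From mathcomp Require Import zify.
From Stdlib Require Import Classical.

Theorem proposition2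
  (M : Type) (mulM : M -> M -> M) (oneM : M)
  (N : finType) (mulN : N -> N -> N) (oneN : N)
  (phi : M -> N) :
  is_monoid mulM oneM ->
  is_monoid mulN oneN ->
  arbitrarily_divisible mulM oneM ->
  is_monoid_morphism mulM oneM mulN oneN phi ->
  forall m : M, mulN (phi m) (phi m) = phi m.
Proof.
move=> _ [assN [l1N r1N]] div [phi1 phiM] m.
set n := #|N|.
set pw := fun k x => mpow mulN oneN k x.
have pwD : forall a b x, pw (a + b) x = mulN (pw a x) (pw b x).
  move=> a b x; elim: a => [|a IH] /=; first by rewrite l1N.
  by rewrite /pw /= -/(pw _ _) IH assN.
have phiX : forall k r, phi (mpow mulM oneM k r) = pw k (phi r).
  by move=> k r; elim: k => [|k IH] //=; rewrite phiM IH.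
have [r Hr] := div m (n.+1)`! (fact_gt0 _).
rewrite -Hr phiX.
set x := phi r; set k := (n.+1)`!.
have: ~ injective (fun i : 'I_n.+1 => pw i.+1 x).
  by move=> /leq_card; rewrite card_ord ltnn.
move=> ninj.
have [i [j [ij eqij]]] : exists i j : nat, i < j <= n /\ pw i.+1 x = pw j.+1 x.
  apply: Classical_Prop.NNPP => H; apply: ninj => a b /= Hab.
  apply/val_inj; apply/eqP; case: (ltngtP a b) => // h; exfalso; apply: H.
  - by exists a, b; rewrite h -ltnS ltn_ord.
  - by exists b, a; rewrite h -ltnS ltn_ord.
move/andP: ij => [ij jn].
set p := j - i.
have per1 : forall a, i.+1 <= a -> pw a x = pw (a + p) x.
  move=> a ha.
  have -> : a = (a - i.+1) + i.+1 by rewrite subnK.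
  rewrite pwD eqij -addnA pwD; congr (mulN _ (pw _ x)).
  rewrite /p; lia.
have perc : forall c a, i.+1 <= a -> pw a x = pw (a + c * p) x.
  elim=> [|c IH] a ha; first by rewrite addn0.
  rewrite IH // per1; last by lia.
  congr (pw _ x); rewrite mulSn; lia.
have pk : p %| k by apply: dvdn_fact; rewrite /p; apply/andP; split; lia.
have ik : i.+1 <= k.
  apply: leq_trans (fact_geq _); lia.
rewrite -pwD -(divnK pk) -perc //; by rewrite divnK.
Qed.
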